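(* Let $k\in\mathbb N$, $R\ge 1$, let $W(k,R)=B^{\omega_k}_R(e)\cap\mathcal B^{\mathbb C}_{TM}$, and let $N\in\mathbb N$ satisfy $8R<2^{N-k}$. Then for all $a,b\in W(k,R)$ the elements $a\cdot b$ and $a^{-1}$ lie in $\mathbb C^{\mathcal T_0}(\omega_N)$, and the maps $$\mu^R_k\colon W(k,R)\times W(k,R)\to\mathbb C^{\mathcal T_0}(\omega_N),\ (a,b)\mapsto a\cdot b,\qquad \iota^R_k\colon W(k,R)\to\mathbb C^{\mathcal T_0}(\omega_N),\ a\mapsto a^{-1}$$ are continuous, where $W(k,R)$ carries the topology of the norm $\|\cdot\|_{\omega_k}$ and the target the topology of $\|\cdot\|_{\omega_N}$.
   Context: $\mathcal T$ is the set of rooted trees (finite, at least one vertex, up to root-preserving isomorphism), $\mathcal T_0=\mathcal T\cup\{\emptyset\}$, $|\tau|$ the number of vertices. Ordered subtrees $\mathrm{OST}(\tau)$: subsets $s$ of the vertices of $\tau$ connected by edges of $\tau$ and containing the root if nonempty; $s_\tau$ the induced rooted tree; $\tau\setminus s$ the forest left after deleting $s$ and adjacent edges. Partitions $\mathcal P(\tau)$: subsets $p$ of edges; $\tau\setminus p$ the forest left after deleting these edges; $\#(\tau\setminus p)$ its number of trees. For a forest $\mathcal F$, $a(\mathcal F)=\prod_{\theta\in\mathcal F}a(\theta)$. The complex Butcher group $G^{\mathbb C}_{TM}=\{a\colon\mathcal T_0\to\mathbb C\mid a(\emptyset)=1\}$ has product $(a\cdot b)(\tau)=\sum_{s\in\mathrm{OST}(\tau)}b(s_\tau)a(\tau\setminus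 s)$, inverse $a^{-1}(\tau)=\sum_{p\in\mathcal P(\tau)}(-1)^{\#(\tau\setminus p)}a(\tau\setminus p)$ and unit $e$ ($e(\emptyset)=1$, else $0$). $\mathcal B^{\mathbb C}_{TM}=\{a\in G^{\mathbb C}_{TM}\mid\exists C,K>0\ \forall\tau\in\mathcal T:\ |a(\tau)|\le CK^{|\tau|}\}$. For $k\in\mathbb N$, $\omega_k(\tau)=2^{-k|\tau|}$, $\mathbb C^{\mathcal T_0}(\omega_k)=\{a\colon\mathcal T_0\to\mathbb C\mid\|a\|_{\omega_k}:=\sup_\tau|a(\tau)|\omega_k(\tau)<\infty\}$, and $B^{\omega_k}_R(x)$ is the open ball of radius $R$ about $x$ in this Banach space. *)

(* Defs.v *)
From Stdlib Require Import Reals List Permutation.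
Import ListNotations.
Open Scope R_scope.

Definition C : Type := (R * R)%type.
Definition C0 : C := (0, 0).
Definition C1 : C := (1, 0).
Definition Cadd (x y : C) : C := (fst x + fst y, snd x + snd y).
Definition Copp (x : C) : C := (- fst x, - snd x).
Definition Csub (x y : C) : C := Cadd x (Copp y).
Definition Cmul (x y : C) : C :=
  (fst x * fst y - snd x * snd y, fst x * snd y + snd x * fst y).
Definition Cmod (x : C) : R := sqrt (fst x ^ 2 + snd x ^ 2).
Definition Csum (l : list C) : C := fold_right Cadd C0 l.
Definition Cprod (l : list C) : C := fold_right Cmul C1 l.

(** Rooted trees in the paper are taken up to
    root-preserving isomorphism; this is handled by the relation [tree_iso]
    and by requiring elements of the Butcher group to be iso-invariant. *)
Inductive tree : Type := Node : list tree -> tree.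

Inductive tree_iso : tree -> tree -> Prop :=
| iso_node (l1 l l2 : list tree) :
    Permutation l1 l -> Forall2 tree_iso l l2 -> tree_iso (Node l1) (Node l2).

Fixpoint tsize (t : tree) : nat :=
  match t with
  | Node l => S ((fix go (l : list tree) : nat :=
                    match l with [] => 0%nat | c :: l' => (tsize c + go l')%nat end) l)
  end.

(** [T0] : trees together with the empty tree [None]. *)
Definition T0 : Type := option tree.
Definition tsize0 (t : T0) : nat := match t with None => 0%nat | Some t => tsize t end.

Fixpoint combine_choices (opts : list (list (list tree * list tree)))
  : list (list tree * list tree) :=
  match opts with
  | [] => [([], [])]
  | o :: os =>
      flat_map (fun x => map (fun r => (fst x ++ fst r, snd x ++ snd r))
                             (combine_choices os)) o
  end.

(** Nonempty ordered subtrees of [t]: each entry is the pair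
    (s_t, t \ s) = (induced rooted tree on s, forest left after deleting s).
    A nonempty OST contains the root and, for each child c, either no vertex
    of the subtree at c (then that whole subtree is left in the forest), or a
    nonempty OST of the subtree at c. *)
Fixpoint ost_ne (t : tree) : list (tree * list tree) :=
  match t with
  | Node l =>
      map (fun p => (Node (fst p), snd p))
        (combine_choices
           (map (fun c => ([], [c]) :: map (fun q => ([fst q], snd q)) (ost_ne c)) l))
  end.

Definition ost (t : tree) : list (T0 * list tree) :=
  (None, [t]) :: map (fun p => (Some (fst p), snd p)) (ost_ne t).

(** Partitions (subsets of edges) of [t]: each entry is the forest t \ p,
    given as (component containing the root, other components).  For each
    child c, the edge root--c is either kept or deleted, and the subtree at c
    is partitioned recursively. *)
Fixpoint partitions (t : tree) : list (tree * list tree) :=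
  match t with
  | Node l =>
      map (fun p => (Node (fst p), snd p))
        (combine_choices
           (map (fun c =>
                   flat_map (fun q => [([fst q], snd q); ([], fst q :: snd q)])
                            (partitions c)) l))
  end.

Definition forest_eval (a : T0 -> C) (F : list tree) : C :=
  Cprod (map (fun th => a (Some th)) F).

Definition in_GTM (a : T0 -> C) : Prop :=
  a None = C1 /\ forall t1 t2, tree_iso t1 t2 -> a (Some t1) = a (Some t2).

Definition unitG : T0 -> C := fun t => match t with None => C1 | Some _ => C0 end.

Definition bmul (a b : T0 -> C) : T0 -> C :=
  fun t => match t with
           | None => Cmul (b None) (forest_eval a [])
           | Some tau => Csum (map (fun p => Cmul (b (fst p)) (forest_eval a (snd p))) (ost tau))
           end.

Definition sign_pow (n : nat) : C := ((-1) ^ n, 0).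

Definition binv (a : T0 -> C) : T0 -> C :=
  fun t => match t with
           | None => Cmul (sign_pow 0) (forest_eval a [])
           | Some tau =>
               Csum (map (fun p => Cmul (sign_pow (length (fst p :: snd p)))
                                        (forest_eval a (fst p :: snd p)))
                         (partitions tau))
           end.

Definition in_BTM (a : T0 -> C) : Prop :=
  in_GTM a /\
  exists Cc K, 0 < Cc /\ 0 < K /\
    forall tau : tree, Cmod (a (Some tau)) <= Cc * K ^ (tsize tau).

Definition omega (k : nat) (t : T0) : R := (/ 2) ^ (k * tsize0 t).

Definition in_weighted (k : nat) (a : T0 -> C) : Prop :=
  exists M, forall t : T0, Cmod (a t) * omega k t <= M.

Definition norm_lt (k : nat) (a : T0 -> C) (r : R) : Prop :=
  exists r', r' < r /\ forall t : T0, Cmod (a t) * omega k t <= r'.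

Definition dist_lt (k : nat) (a b : T0 -> C) (r : R) : Prop :=
  norm_lt k (fun t => Csub (a t) (b t)) r.

Definition W (k : nat) (Rad : R) (a : T0 -> C) : Prop :=
  dist_lt k a unitG Rad /\ in_BTM a.

(* Main.v *)
Require Import Defs.
From Stdlib Require Import Reals ZArith.
From Stdlib Require Import Lia Lra List Permutation.
From Coquelicot Require Complex.
Import ListNotations.
Open Scope R_scope.

Section CombSec.
Local Open Scope nat_scope.

Fixpoint tree_ind' (P : tree -> Prop) (H : forall l, Forall P l -> P (Node l)) (t : tree) : P t :=
  match t with
  | Node l => H l ((fix go (l : list tree) : Forall P l :=
                      match l with
                      | [] => Forall_nil _
                      | c :: l' => Forall_cons _ (tree_ind' P H c) (go l')
                      end) l)
  end.

Definition sumsize (l : list tree) : nat := fold_right (fun c acc => (tsize c + acc)%nat) 0%nat l.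

Lemma tsize_Node l : tsize (Node l) = S (sumsize l).
Proof. simpl. f_equal; try (induction l; simpl; auto). Qed.

Lemma sumsize_app l1 l2 : sumsize (l1 ++ l2) = (sumsize l1 + sumsize l2)%nat.
Proof. induction l1; simpl; lia. Qed.

Lemma tsize_pos t : (1 <= tsize t)%nat.
Proof. destruct t; rewrite tsize_Node; lia. Qed.

Lemma length_le_sumsize l : (length l <= sumsize l)%nat.
Proof. induction l; simpl; auto. pose proof (tsize_pos a); lia. Qed.

Definition msz (x : list tree * list tree) : nat := (sumsize (fst x) + sumsize (snd x))%nat.

Lemma combine_inv (g : tree -> list (list tree * list tree)) l :
  (forall c, In c l -> forall x, In x (g c) -> msz x = tsize c) ->
  forall r, In r (combine_choices (map g l)) -> msz r = sumsize l.
Proof.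
  induction l as [|c l IH]; intros H r Hr; simpl in Hr.
  - destruct Hr as [<-|[]]. reflexivity.
  - apply in_flat_map in Hr. destruct Hr as [x [Hx Hr]].
    apply in_map_iff in Hr. destruct Hr as [r' [<- Hr']].
    unfold msz in *; simpl.
    rewrite !sumsize_app.
    pose proof (H c (or_introl eq_refl) x Hx).
    pose proof (IH (fun c' h => H c' (or_intror h)) r' Hr').
    simpl. lia.
Qed.

Lemma combine_len (g : tree -> list (list tree * list tree)) (f : tree -> nat) l :
  (forall c, In c l -> (length (g c) <= 2 ^ f c)%nat) ->
  (length (combine_choices (map g l)) <= 2 ^ (fold_right (fun c acc => f c + acc) 0 l))%nat.
Proof.
  induction l as [|c l IH]; intros H; simpl.
  - lia.
  - assert (E : forall o : list (list tree * list tree),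
               (length (flat_map (fun x => map (fun r => (fst x ++ fst r, snd x ++ snd r))
                    (combine_choices (map g l))) o) = length o * length (combine_choices (map g l)))%nat).
    { induction o; simpl; auto. rewrite length_app, length_map, IHo. lia. }
    rewrite E, Nat.pow_add_r. apply Nat.mul_le_mono.
    + apply H; left; auto.
    + apply IH. intros c' Hc'; apply H; right; auto.
Qed.

Lemma ost_ne_inv t : forall p, In p (ost_ne t) -> (tsize (fst p) + sumsize (snd p))%nat = tsize t.
Proof.
  induction t as [l IHl] using tree_ind'.
  intros p Hp. simpl in Hp. apply in_map_iff in Hp. destruct Hp as [r [<- Hr]].
  assert (msz r = sumsize l).
  { eapply combine_inv; [|exact Hr].
    intros c Hc x Hx. rewrite Forall_forall in IHl. specialize (IHl c Hc).
    destruct Hx as [<-|Hx].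
    - unfold msz; simpl. lia.
    - apply in_map_iff in Hx. destruct Hx as [q [<- Hq]]. specialize (IHl q Hq).
      unfold msz; simpl. lia. }
  unfold msz in H. cbn [fst snd]. rewrite !tsize_Node. lia.
Qed.

Lemma ost_inv t : forall p, In p (ost t) -> (tsize0 (fst p) + sumsize (snd p))%nat = tsize t.
Proof.
  intros p [<-|Hp].
  - simpl. lia.
  - apply in_map_iff in Hp. destruct Hp as [q [<- Hq]]. simpl. apply ost_ne_inv; auto.
Qed.

Lemma ost_ne_len t : (S (length (ost_ne t)) <= 2 ^ tsize t)%nat.
Proof.
  induction t as [l IHl] using tree_ind'.
  rewrite tsize_Node. simpl (length _). rewrite length_map.
  assert (length (combine_choices (map (fun c => ([], [c]) :: map (fun q => ([fst q], snd q)) (ost_ne c)) l)) <= 2 ^ sumsize l)%nat.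
  { apply (combine_len _ tsize). intros c Hc. rewrite Forall_forall in IHl.
    specialize (IHl c Hc). simpl. rewrite length_map. lia. }
  rewrite Nat.pow_succ_r'. pose proof (Nat.pow_nonzero 2 (sumsize l)). lia.
Qed.

Lemma ost_len t : (length (ost t) <= 2 ^ tsize t)%nat.
Proof. unfold ost. simpl. rewrite length_map. apply ost_ne_len. Qed.

Lemma part_inv t : forall p, In p (partitions t) -> (tsize (fst p) + sumsize (snd p))%nat = tsize t.
Proof.
  induction t as [l IHl] using tree_ind'.
  intros p Hp. simpl in Hp. apply in_map_iff in Hp. destruct Hp as [r [<- Hr]].
  assert (msz r = sumsize l).
  { eapply combine_inv; [|exact Hr].
    intros c Hc x Hx. rewrite Forall_forall in IHl. specialize (IHl c Hc).
    apply in_flat_map in Hx. destruct Hx as [q [Hq Hx]]. specialize (IHl q Hq).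
    destruct Hx as [<-|[<-|[]]]; unfold msz; simpl; lia. }
  unfold msz in H. cbn [fst snd]. rewrite !tsize_Node. lia.
Qed.

Lemma part_len t : (2 * length (partitions t) <= 2 ^ tsize t)%nat.
Proof.
  induction t as [l IHl] using tree_ind'.
  rewrite tsize_Node. simpl (length _). rewrite length_map.
  assert (length (combine_choices (map (fun c => flat_map (fun q => [([fst q], snd q); ([], fst q :: snd q)]) (partitions c)) l)) <= 2 ^ sumsize l)%nat.
  { apply (combine_len _ tsize). intros c Hc. rewrite Forall_forall in IHl.
    specialize (IHl c Hc).
    assert (E : forall o : list (tree * list tree), (length (flat_map (fun q => [([fst q], snd q); ([], fst q :: snd q)]) o) = 2 * length o)%nat).
    { induction o; simpl; auto. rewrite IHo. lia. }
    rewrite E. lia. }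
  rewrite Nat.pow_succ_r'. lia.
Qed.

End CombSec.

Lemma Cmod_ge0 x : 0 <= Cmod x.
Proof. apply sqrt_pos. Qed.

Lemma Cmod_mul x y : Cmod (Cmul x y) = Cmod x * Cmod y.
Proof.
  destruct x as [a b], y as [c d]. unfold Cmod, Cmul; simpl.
  rewrite <- sqrt_mult by nra. f_equal. ring.
Qed.

Lemma Cmod_tri x y : Cmod (Cadd x y) <= Cmod x + Cmod y.
Proof. exact (Complex.Cmod_triangle x y). Qed.

Lemma Cmod_C1 : Cmod Defs.C1 = 1.
Proof. unfold Cmod, Defs.C1; simpl. match goal with |- sqrt ?e = _ => replace e with 1 by ring end. apply sqrt_1. Qed.

Lemma Csub_C0 x : Csub x Defs.C0 = x.
Proof. destruct x; unfold Csub, Cadd, Copp, Defs.C0; simpl; f_equal; ring. Qed.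

Lemma Cmod_Csub_self x : Cmod (Csub x x) = 0.
Proof.
  destruct x; unfold Cmod, Csub, Cadd, Copp; simpl.
  replace ((r + - r) * ((r + - r) * 1) + (r0 + - r0) * ((r0 + - r0) * 1)) with 0 by ring.
  apply sqrt_0.
Qed.

Lemma Cmod_sign n : Cmod (sign_pow n) = 1.
Proof.
  unfold Cmod, sign_pow; simpl.
  replace ((-1) ^ n * ((-1) ^ n * 1) + 0 * (0 * 1)) with (((-1)^2)^n).
  - replace ((-1)^2) with 1 by ring. rewrite pow1. apply sqrt_1.
  - rewrite <- pow_mult, Nat.mul_comm, pow_mult. simpl. ring.
Qed.

Lemma Cmul_diff x' x y' y :
  Cmod (Csub (Cmul x' y') (Cmul x y)) <= Cmod (Csub x' x) * Cmod y' + Cmod x * Cmod (Csub y' y).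
Proof.
  replace (Csub (Cmul x' y') (Cmul x y)) with (Cadd (Cmul (Csub x' x) y') (Cmul x (Csub y' y))).
  - rewrite <- !Cmod_mul. apply Cmod_tri.
  - destruct x', x, y', y; unfold Csub, Cadd, Copp, Cmul; simpl; f_equal; ring.
Qed.

Lemma Csum_diff {A} (l : list A) f g w B : 0 <= w ->
  (forall p, In p l -> Cmod (Csub (f p) (g p)) * w <= B) ->
  Cmod (Csub (Csum (map f l)) (Csum (map g l))) * w <= INR (length l) * B.
Proof.
  intros Hw. induction l as [|p l IH]; intros H.
  - simpl. unfold Defs.C0. rewrite (Cmod_Csub_self (0,0)). lra.
  - change (Csum (map f (p::l))) with (Cadd (f p) (Csum (map f l))).
    change (Csum (map g (p::l))) with (Cadd (g p) (Csum (map g l))).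
    replace (Csub (Cadd (f p) (Csum (map f l))) (Cadd (g p) (Csum (map g l))))
      with (Cadd (Csub (f p) (g p)) (Csub (Csum (map f l)) (Csum (map g l)))).
    2:{ destruct (f p), (g p), (Csum (map f l)), (Csum (map g l));
        unfold Csub, Cadd, Copp; simpl; f_equal; ring. }
    replace (INR (length (p::l))) with (INR (length l) + 1) by (simpl length; rewrite S_INR; ring).
    pose proof (Cmod_tri (Csub (f p) (g p)) (Csub (Csum (map f l)) (Csum (map g l)))).
    pose proof (H p (or_introl eq_refl)).
    pose proof (IH (fun q h => H q (or_intror h))).
    apply Rmult_le_compat_r with (r := w) in H0; auto. nra.
Qed.

Lemma Csum_bound {A} (l : list A) f w B : 0 <= w ->
  (forall p, In p l -> Cmod (f p) * w <= B) ->
  Cmod (Csum (map f l)) * w <= INR (length l) * B.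
Proof.
  intros Hw. induction l as [|p l IH]; intros H.
  - simpl. unfold Cmod, Defs.C0; simpl. replace (0 * (0 * 1) + 0 * (0 * 1)) with 0 by ring.
    rewrite sqrt_0. lra.
  - change (Csum (map f (p::l))) with (Cadd (f p) (Csum (map f l))).
    replace (INR (length (p::l))) with (INR (length l) + 1) by (simpl length; rewrite S_INR; ring).
    pose proof (Cmod_tri (f p) (Csum (map f l))).
    pose proof (H p (or_introl eq_refl)).
    pose proof (IH (fun q h => H q (or_intror h))).
    apply Rmult_le_compat_r with (r := w) in H0; auto. nra.
Qed.

Definition HB (k : nat) (Rad : R) (a : T0 -> Defs.C) := forall t, Cmod (a t) * omega k t <= Rad.
Definition HD (k : nat) (a' a : T0 -> Defs.C) (d : R) :=
  forall t, Cmod (Csub (a' t) (a t)) * omega k t <= d.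

Lemma wpos m : 0 <= (/ 2) ^ m.
Proof. apply pow_le. lra. Qed.

Lemma wsplit k n1 n2 : (/2) ^ (k * (n1 + n2)) = (/2) ^ (k * n1) * (/2) ^ (k * n2).
Proof. rewrite Nat.mul_add_distr_l, pow_add. reflexivity. Qed.

Lemma forest_cons a c F : forest_eval a (c :: F) = Cmul (a (Some c)) (forest_eval a F).
Proof. reflexivity. Qed.

Lemma comb_arith Rad d L A B C D : 1 <= Rad -> 0 <= d ->
  0 <= A <= d -> 0 <= B <= Rad ^ L -> 0 <= C <= Rad -> 0 <= D <= INR L * d * Rad ^ L ->
  A * B + C * D <= INR (S L) * d * Rad ^ (S L).
Proof.
  intros HR Hd [HA1 HA2] [HB1 HB2] [HC1 HC2] [HD1 HD2].
  rewrite S_INR. simpl.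
  pose proof (pow_le Rad L ltac:(lra)) as HP.
  pose proof (pos_INR L) as HL.
  assert (A * B <= d * Rad ^ L) by (apply Rmult_le_compat; lra).
  assert (C * D <= Rad * (INR L * d * Rad ^ L)) by (apply Rmult_le_compat; lra).
  assert (d * Rad ^ L <= d * (Rad * Rad ^ L)) by (apply Rmult_le_compat_l; nra).
  nra.
Qed.

Lemma forest_bound k Rad a : 1 <= Rad -> HB k Rad a -> forall F,
  Cmod (forest_eval a F) * (/2) ^ (k * sumsize F) <= Rad ^ (length F).
Proof.
  intros HR H F. induction F as [|c F IH].
  - simpl. rewrite Nat.mul_0_r. unfold forest_eval; simpl. rewrite Cmod_C1. lra.
  - rewrite forest_cons, Cmod_mul. simpl sumsize. rewrite wsplit. simpl length.
    change (Rad ^ S (length F)) with (Rad * Rad ^ length F).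
    replace (Cmod (a (Some c)) * Cmod (forest_eval a F) * ((/ 2) ^ (k * tsize c) * (/ 2) ^ (k * sumsize F)))
      with ((Cmod (a (Some c)) * (/ 2) ^ (k * tsize c)) * (Cmod (forest_eval a F) * (/ 2) ^ (k * sumsize F))) by ring.
    apply Rmult_le_compat; auto.
    all: try (apply Rmult_le_pos; [apply Cmod_ge0|apply wpos]).
    all: try exact (H (Some c)).
Qed.

Lemma forest_diff k Rad a a' d : 1 <= Rad -> 0 <= d -> HB k Rad a -> HB k Rad a' -> HD k a' a d ->
  forall F, Cmod (Csub (forest_eval a' F) (forest_eval a F)) * (/2) ^ (k * sumsize F)
            <= INR (length F) * d * Rad ^ (length F).
Proof.
  intros HR Hd Ha Ha' H F. induction F as [|c F IH].
  - simpl. unfold forest_eval; simpl. rewrite Cmod_Csub_self. lra.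
  - rewrite !forest_cons. simpl sumsize. rewrite wsplit. simpl length.
    eapply Rle_trans.
    { apply Rmult_le_compat_r. apply Rmult_le_pos; apply wpos. apply Cmul_diff. }
    set (w1 := (/ 2) ^ (k * tsize c)). set (w2 := (/ 2) ^ (k * sumsize F)).
    replace ((Cmod (Csub (a' (Some c)) (a (Some c))) * Cmod (forest_eval a' F) +
              Cmod (a (Some c)) * Cmod (Csub (forest_eval a' F) (forest_eval a F))) * (w1 * w2))
      with ((Cmod (Csub (a' (Some c)) (a (Some c))) * w1) * (Cmod (forest_eval a' F) * w2) +
            (Cmod (a (Some c)) * w1) * (Cmod (Csub (forest_eval a' F) (forest_eval a F)) * w2)) by ring.
    assert (0 <= w1) by apply wpos. assert (0 <= w2) by apply wpos.
    apply comb_arith; auto; split;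
      try (apply Rmult_le_pos; [apply Cmod_ge0|auto]).
    + exact (H (Some c)).
    + apply forest_bound; auto.
    + exact (Ha (Some c)).
    + exact IH.
Qed.

Lemma mono Rad d L M : 1 <= Rad -> 0 <= d -> (L <= M)%nat -> INR L * d * Rad ^ L <= INR M * d * Rad ^ M.
Proof.
  intros. apply Rmult_le_compat.
  - apply Rmult_le_pos; [apply pos_INR|auto].
  - apply pow_le; lra.
  - apply Rmult_le_compat_r; auto. apply le_INR; auto.
  - apply Rle_pow; auto.
Qed.

Lemma len_pow2 (n m : nat) : (m <= 2 ^ n)%nat -> INR m <= 2 ^ n.
Proof.
  intros H. apply le_INR in H. rewrite pow_INR in H. replace (INR 2) with 2 in H by (simpl; ring). exact H.
Qed.

Lemma omega_Some k c : omega k (Some c) = (/2) ^ (k * tsize c).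
Proof. reflexivity. Qed.

Lemma bmul_diff k Rad d a b a' b' tau : 1 <= Rad -> 0 <= d ->
  HB k Rad a -> HB k Rad b -> HB k Rad a' -> HB k Rad b' -> HD k a' a d -> HD k b' b d ->
  Cmod (Csub (bmul a' b' (Some tau)) (bmul a b (Some tau))) * (/2) ^ (k * tsize tau)
  <= 2 ^ (tsize tau) * (INR (S (tsize tau)) * d * Rad ^ (S (tsize tau))).
Proof.
  intros HR Hd Ha Hb Ha' Hb' HDa HDb.
  assert (HBB : 0 <= INR (S (tsize tau)) * d * Rad ^ (S (tsize tau))).
  { apply Rmult_le_pos; [apply Rmult_le_pos; [apply pos_INR|auto]|apply pow_le; lra]. }
  cbn [bmul]. eapply Rle_trans.
  { apply Csum_diff with (B := INR (S (tsize tau)) * d * Rad ^ (S (tsize tau))). apply wpos. intros [s F] Hp.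
    pose proof (ost_inv tau _ Hp) as E. cbn [fst snd] in *.
    rewrite <- E, wsplit.
    eapply Rle_trans.
    { apply Rmult_le_compat_r. apply Rmult_le_pos; apply wpos. apply Cmul_diff. }
    set (w1 := (/ 2) ^ (k * tsize0 s)). set (w2 := (/ 2) ^ (k * sumsize F)).
    assert (0 <= w1) by apply wpos. assert (0 <= w2) by apply wpos.
    replace ((Cmod (Csub (b' s) (b s)) * Cmod (forest_eval a' F) +
              Cmod (b s) * Cmod (Csub (forest_eval a' F) (forest_eval a F))) * (w1 * w2))
      with ((Cmod (Csub (b' s) (b s)) * w1) * (Cmod (forest_eval a' F) * w2) +
            (Cmod (b s) * w1) * (Cmod (Csub (forest_eval a' F) (forest_eval a F)) * w2)) by ring.
    eapply Rle_trans.
    { apply (comb_arith Rad d (length F)); auto.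
      all: try split; try (apply Rmult_le_pos; [apply Cmod_ge0|auto]).
      all: try exact (HDb s); try exact (Hb s); try (apply forest_bound; auto);
           try (apply forest_diff; auto). }
    apply mono; auto. pose proof (length_le_sumsize F). lia. }
  apply Rmult_le_compat_r; auto. apply len_pow2, ost_len.
Qed.

Lemma bmul_bound k Rad a b tau : 1 <= Rad -> HB k Rad a -> HB k Rad b ->
  Cmod (bmul a b (Some tau)) * (/2) ^ (k * tsize tau) <= 2 ^ (tsize tau) * Rad ^ (S (tsize tau)).
Proof.
  intros HR Ha Hb.
  assert (HBB : 0 <= Rad ^ (S (tsize tau))) by (apply pow_le; lra).
  cbn [bmul]. eapply Rle_trans.
  { apply Csum_bound with (B := Rad ^ (S (tsize tau))). apply wpos. intros [s F] Hp.
    pose proof (ost_inv tau _ Hp) as E. cbn [fst snd] in *.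
    rewrite <- E, wsplit, Cmod_mul.
    set (w1 := (/ 2) ^ (k * tsize0 s)). set (w2 := (/ 2) ^ (k * sumsize F)).
    assert (0 <= w1) by apply wpos. assert (0 <= w2) by apply wpos.
    replace (Cmod (b s) * Cmod (forest_eval a F) * (w1 * w2))
      with ((Cmod (b s) * w1) * (Cmod (forest_eval a F) * w2)) by ring.
    eapply Rle_trans.
    { apply Rmult_le_compat.
      - apply Rmult_le_pos; [apply Cmod_ge0|auto].
      - apply Rmult_le_pos; [apply Cmod_ge0|auto].
      - exact (Hb s).
      - apply (forest_bound k Rad); auto. }
    change (Rad * Rad ^ length F) with (Rad ^ S (length F)).
    apply Rle_pow; auto. pose proof (length_le_sumsize F). lia. }
  apply Rmult_le_compat_r; auto. apply len_pow2, ost_len.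
Qed.

Lemma binv_diff k Rad d a a' tau : 1 <= Rad -> 0 <= d ->
  HB k Rad a -> HB k Rad a' -> HD k a' a d ->
  Cmod (Csub (binv a' (Some tau)) (binv a (Some tau))) * (/2) ^ (k * tsize tau)
  <= 2 ^ (tsize tau) * (INR (S (tsize tau)) * d * Rad ^ (S (tsize tau))).
Proof.
  intros HR Hd Ha Ha' HDa.
  assert (HBB : 0 <= INR (S (tsize tau)) * d * Rad ^ (S (tsize tau))).
  { apply Rmult_le_pos; [apply Rmult_le_pos; [apply pos_INR|auto]|apply pow_le; lra]. }
  cbn [binv]. eapply Rle_trans.
  { apply Csum_diff with (B := INR (S (tsize tau)) * d * Rad ^ (S (tsize tau))). apply wpos. intros [c F] Hp.
    pose proof (part_inv tau _ Hp) as E. cbn [fst snd] in *.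
    assert (E2 : sumsize (c :: F) = tsize tau) by (simpl; lia).
    rewrite <- E2.
    eapply Rle_trans.
    { apply Rmult_le_compat_r. apply wpos. apply Cmul_diff. }
    rewrite Cmod_Csub_self, Cmod_sign, Rmult_0_l, Rplus_0_l, Rmult_1_l.
    eapply Rle_trans. { apply (forest_diff k Rad a a' d); eauto. }
    apply mono; auto. pose proof (length_le_sumsize (c :: F)). lia. }
  apply Rmult_le_compat_r; auto. apply len_pow2.
  pose proof (part_len tau). lia.
Qed.

Lemma binv_bound k Rad a tau : 1 <= Rad -> HB k Rad a ->
  Cmod (binv a (Some tau)) * (/2) ^ (k * tsize tau) <= 2 ^ (tsize tau) * Rad ^ (S (tsize tau)).
Proof.
  intros HR Ha.
  assert (HBB : 0 <= Rad ^ (S (tsize tau))) by (apply pow_le; lra).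
  cbn [binv]. eapply Rle_trans.
  { apply Csum_bound with (B := Rad ^ (S (tsize tau))). apply wpos. intros [c F] Hp.
    pose proof (part_inv tau _ Hp) as E. cbn [fst snd] in *.
    assert (E2 : sumsize (c :: F) = tsize tau) by (simpl; lia).
    rewrite <- E2, Cmod_mul, Cmod_sign, Rmult_1_l.
    eapply Rle_trans. { apply (forest_bound k Rad); eauto. }
    apply Rle_pow; auto. pose proof (length_le_sumsize (c :: F)). lia. }
  apply Rmult_le_compat_r; auto. apply len_pow2.
  pose proof (part_len tau). lia.
Qed.

Lemma INR_S_pow n : INR (S n) <= 2 ^ n.
Proof.
  induction n. simpl; lra. rewrite S_INR. change (2 ^ S n) with (2 * 2 ^ n).
  pose proof (pow_R1_Rle 2 n ltac:(lra)). lra.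
Qed.

Lemma final_bound k m n Rad A : 1 <= Rad -> 0 <= A -> 2 * Rad * (/2)^m <= 1 ->
  A * (/2) ^ (k * n) <= 2 ^ n * Rad ^ (S n) -> A * (/2) ^ ((k + m) * n) <= Rad.
Proof.
  intros HR HA Hx H.
  rewrite Nat.mul_add_distr_r, pow_add, (pow_mult (/2) m n).
  set (x := (/2)^m) in *. assert (0 <= x) by apply wpos.
  rewrite <- Rmult_assoc.
  eapply Rle_trans. { apply Rmult_le_compat_r. apply pow_le; auto. exact H. }
  replace (2 ^ n * Rad ^ S n * x ^ n) with (Rad * (2 * Rad * x) ^ n)
    by (rewrite !Rpow_mult_distr; simpl; ring).
  assert ((2 * Rad * x) ^ n <= 1).
  { rewrite <- (pow1 n). apply pow_incr. split; auto. apply Rmult_le_pos; auto. lra. }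
  nra.
Qed.

Lemma final_diff k m n Rad d A : 1 <= Rad -> 0 <= d -> 0 <= A -> 4 * Rad * (/2)^m <= 1 ->
  A * (/2) ^ (k * n) <= 2 ^ n * (INR (S n) * d * Rad ^ (S n)) -> A * (/2) ^ ((k + m) * n) <= d * Rad.
Proof.
  intros HR Hd HA Hx H.
  rewrite Nat.mul_add_distr_r, pow_add, (pow_mult (/2) m n).
  set (x := (/2)^m) in *. assert (0 <= x) by apply wpos.
  rewrite <- Rmult_assoc.
  eapply Rle_trans. { apply Rmult_le_compat_r. apply pow_le; auto. exact H. }
  assert (HP: 0 <= 2 ^ n) by (apply pow_le; lra).
  assert (HQ: 0 <= Rad ^ S n) by (apply pow_le; lra).
  eapply Rle_trans.
  { apply Rmult_le_compat_r. apply pow_le; auto. apply Rmult_le_compat_l; auto.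
    apply Rmult_le_compat_r; auto. apply Rmult_le_compat_r; auto. apply INR_S_pow. }
  replace (2 ^ n * (2 ^ n * d * Rad ^ S n) * x ^ n) with (d * Rad * (2 * 2 * Rad * x) ^ n)
    by (rewrite !Rpow_mult_distr; simpl; ring).
  assert ((2 * 2 * Rad * x) ^ n <= 1).
  { rewrite <- (pow1 n). apply pow_incr. split. apply Rmult_le_pos; auto. lra. lra. }
  assert (0 <= d * Rad) by nra. nra.
Qed.

Lemma get_m (k N : nat) (Rad : R) : 1 <= Rad ->
  8 * Rad < powerRZ 2 (Z.of_nat N - Z.of_nat k)%Z ->
  exists m, N = (k + m)%nat /\ 8 * Rad * (/2) ^ m < 1.
Proof.
  intros HR H. destruct (le_lt_dec k N) as [Hle|Hlt].
  - exists (N - k)%nat. split; [lia|].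
    rewrite <- Nat2Z.inj_sub in H by lia. rewrite <- pow_powerRZ in H.
    rewrite pow_inv. assert (0 < 2 ^ (N - k)) by (apply pow_lt; lra).
    apply (Rmult_lt_reg_r (2 ^ (N - k))); auto.
    rewrite Rmult_assoc, Rinv_l by lra. lra.
  - exfalso.
    replace (Z.of_nat N - Z.of_nat k)%Z with (- Z.of_nat (k - N))%Z in H by lia.
    rewrite powerRZ_neg', <- pow_powerRZ in H.
    pose proof (pow_R1_Rle 2 (k - N) ltac:(lra)).
    assert (/ 2 ^ (k - N) <= 1).
    { rewrite <- Rinv_1. apply Rinv_le_contravar; lra. }
    lra.
Qed.

Lemma W_HB k Rad a : 1 <= Rad -> W k Rad a -> HB k Rad a /\ a None = Defs.C1.
Proof.
  intros HR [[r [Hr H]] [[HN _] _]]. split; auto.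
  intros [t|].
  - specialize (H (Some t)). cbn [unitG] in H. rewrite Csub_C0 in H. lra.
  - rewrite HN, Cmod_C1. unfold omega. simpl. rewrite Nat.mul_0_r. simpl. lra.
Qed.

Lemma dist_HD k a' a delta : dist_lt k a' a delta -> exists d, 0 <= d /\ d < delta /\ HD k a' a d.
Proof.
  intros [r [Hr H]]. exists r. split; [|split; auto].
  specialize (H None). eapply Rle_trans; [|exact H].
  apply Rmult_le_pos; [apply Cmod_ge0|]. unfold omega. apply wpos.
Qed.

Lemma HD_weaken k a' a d d' : HD k a' a d -> d <= d' -> HD k a' a d'.
Proof. intros H Hd t. specialize (H t). lra. Qed.

Theorem proposition2p3 (k : nat) (Rad : R) (N : nat) :
  1 <= Rad ->
  8 * Rad < powerRZ 2 (Z.of_nat N - Z.of_nat k)%Z ->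
  (forall a b, W k Rad a -> W k Rad b ->
     in_weighted N (bmul a b) /\ in_weighted N (binv a)) /\
  (forall a b, W k Rad a -> W k Rad b ->
     forall eps, 0 < eps -> exists delta, 0 < delta /\
       forall a' b', W k Rad a' -> W k Rad b' ->
         dist_lt k a' a delta -> dist_lt k b' b delta ->
         dist_lt N (bmul a' b') (bmul a b) eps) /\
  (forall a, W k Rad a ->
     forall eps, 0 < eps -> exists delta, 0 < delta /\
       forall a', W k Rad a' ->
         dist_lt k a' a delta ->
         dist_lt N (binv a') (binv a) eps).
Proof.
  intros HR Hpow.
  destruct (get_m k N Rad HR Hpow) as [m [-> Hm]].
  assert (Hx0 : 0 <= (/2) ^ m) by apply wpos.
  assert (H2 : 2 * Rad * (/2) ^ m <= 1) by nra.
  assert (H4 : 4 * Rad * (/2) ^ m <= 1) by nra.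
  assert (Hom : forall t, omega (k + m) (Some t) = (/2) ^ ((k + m) * tsize t)) by reflexivity.
  assert (Hom0 : forall j, omega j None = 1) by (intros j; unfold omega; simpl; rewrite Nat.mul_0_r; reflexivity).
  split; [|split].
  - intros a b Wa Wb.
    destruct (W_HB _ _ _ HR Wa) as [Ha Ha0]. destruct (W_HB _ _ _ HR Wb) as [Hb Hb0].
    split; exists Rad; intros [t|].
    + rewrite Hom. apply final_bound with (k := k); auto. apply Cmod_ge0.
      apply bmul_bound; auto.
    + rewrite Hom0. cbn [bmul]. rewrite Hb0, Cmod_mul, Cmod_C1. unfold forest_eval; simpl.
      rewrite Cmod_C1. lra.
    + rewrite Hom. apply final_bound with (k := k); auto. apply Cmod_ge0.
      apply binv_bound; auto.
    + rewrite Hom0. cbn [binv]. rewrite Cmod_mul, Cmod_sign. unfold forest_eval; simpl.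
      rewrite Cmod_C1. lra.
  - intros a b Wa Wb eps Heps.
    destruct (W_HB _ _ _ HR Wa) as [Ha Ha0]. destruct (W_HB _ _ _ HR Wb) as [Hb Hb0].
    exists (eps / (2 * Rad)). split. { apply Rdiv_lt_0_compat; lra. }
    intros a' b' Wa' Wb' Da Db.
    destruct (W_HB _ _ _ HR Wa') as [Ha' Ha0']. destruct (W_HB _ _ _ HR Wb') as [Hb' Hb0'].
    destruct (dist_HD _ _ _ _ Da) as [d1 [Hd1 [Hd1' HD1]]].
    destruct (dist_HD _ _ _ _ Db) as [d2 [Hd2 [Hd2' HD2]]].
    set (d := Rmax d1 d2).
    assert (Hd : 0 <= d) by (unfold d; apply (Rle_trans _ d1); auto; apply Rmax_l).
    assert (Hdd : d < eps / (2 * Rad)) by (unfold d; apply Rmax_lub_lt; auto).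
    exists (d * Rad). split.
    { assert (d * Rad < eps / (2 * Rad) * Rad) by (apply Rmult_lt_compat_r; lra).
      replace (eps / (2 * Rad) * Rad) with (eps / 2) in H by (field; lra). lra. }
    intros [t|].
    + rewrite Hom. apply final_diff with (k := k); auto. apply Cmod_ge0.
      apply bmul_diff; auto.
      * apply (HD_weaken _ _ _ d1); auto. apply Rmax_l.
      * apply (HD_weaken _ _ _ d2); auto. apply Rmax_r.
    + rewrite Hom0. cbn [bmul]. rewrite Hb0, Hb0'. unfold forest_eval; simpl.
      rewrite Cmod_Csub_self. nra.
  - intros a Wa eps Heps.
    destruct (W_HB _ _ _ HR Wa) as [Ha Ha0].
    exists (eps / (2 * Rad)). split. { apply Rdiv_lt_0_compat; lra. }
    intros a' Wa' Da.
    destruct (W_HB _ _ _ HR Wa') as [Ha' Ha0'].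
    destruct (dist_HD _ _ _ _ Da) as [d [Hd [Hdd HD1]]].
    exists (d * Rad). split.
    { assert (d * Rad < eps / (2 * Rad) * Rad) by (apply Rmult_lt_compat_r; lra).
      replace (eps / (2 * Rad) * Rad) with (eps / 2) in H by (field; lra). lra. }
    intros [t|].
    + rewrite Hom. apply final_diff with (k := k); auto. apply Cmod_ge0.
      apply binv_diff; auto.
    + rewrite Hom0. cbn [binv]. unfold forest_eval; simpl.
      rewrite Cmod_Csub_self. nra.
Qed.
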